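(* Let $f:\mathbb{N}^*\to\mathbb{N}^*$ and let $G$ be an $n$-vertex median graph in $\mathcal{U}_f$ with $f(n)\ge 2$. Then there exists a unique vertex $v_0$ of $G$ such that, for every $\Theta$-class $E_i$ of $G$, $v_0$ belongs to the majority halfspace of $E_i$ (the halfspace of strictly larger cardinality).
   Context: Graphs are finite, simple, connected and undirected; a graph is median if for every triple $x,y,z$ of vertices, $I(x,y)\cap I(y,z)\cap I(z,x)$ is a single vertex, where $I(u,v)=\{x: d(u,x)+d(x,v)=d(u,v)\}$. Two edges $uv$, $xy$ are in relation $\Theta_0$ if $u,v,y,x$ form a 4-cycle in which $uv$ and $xy$ are opposite; $\Theta$ is the reflexive–transitive closure of $\Theta_0$ and its classes are the $\Theta$-classes. In a median graph, deleting a $\Theta$-class $E_i$ leaves exactly two connected components with vertex sets $H_i',H_i''$ (the halfspaces). Given $f:\mathbb{N}^*\to\mathbb{N}^*$, a $\Theta$-class $E_i$ of a graph with $n$ vertices is $f$-balanced if $\min\{|H_i'|,|H_i''|\}\ge n/f(n)$, and $f$-unbalanced otherwise. $\mathcal{U}_f$ is the family of median graphs all of whose $\Theta$-classes are $f$-unbalanced. *)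

(* Defs.v *)
From mathcomp Require Import all_boot.
Set Implicit Arguments. Unset Strict Implicit. Unset Printing Implicit Defensive.

Section Graphs.
Variables (T : finType) (e : rel T).

Definition simple_graph := symmetric e /\ irreflexive e.
Definition connected_graph := forall x y : T, connect e x y.

Fixpoint walk_len (x y : T) (n : nat) : bool :=
  if n is n'.+1 then [exists z, e x z && walk_len z y n'] else x == y.

(* graph distance: least n with a walk of length n (distances in a connected
   graph are < #|T|; value #|T| if unreachable) *)
Definition dist (x y : T) : nat := find (walk_len x y) (iota 0 #|T|).

Definition interval (u v : T) : {set T} :=
  [set x | dist u x + dist x v == dist u v].

Definition median_graph :=
  forall x y z : T, #|interval x y :&: interval y z :&: interval z x| = 1.

Definition square (a b c d : T) : bool :=
  [&& e a b, e b c, e c d, e d a, a != c & b != d].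

(* Theta_0 on (oriented representatives of) edges: uv and xy are opposite
   edges of a 4-cycle u,v,y,x (in either orientation of xy) *)
Definition theta0 (p q : T * T) : bool :=
  square p.1 p.2 q.2 q.1 || square p.1 p.2 q.1 q.2.

(* Theta-class of the edge uv, as the set of ordered pairs (both
   orientations) of edges Theta-related to uv *)
Definition theta_class (u v : T) : {set T * T} :=
  [set p : T * T | e p.1 p.2 && (connect theta0 (u, v) p || connect theta0 (v, u) p)].

Definition del_edges (E : {set T * T}) : rel T :=
  fun x y => e x y && ((x, y) \notin E).

Definition comp (E : {set T * T}) (x : T) : {set T} :=
  [set z | connect (del_edges E) x z].

(* every Theta-class is f-unbalanced: for the two halfspaces H', H'' (the two
   components of G - E), min(|H'|,|H''|) < n / f n, i.e. min * f n < n *)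
Definition all_unbalanced (f : nat -> nat) :=
  forall u v : T, e u v ->
  forall a b : T, ~~ connect (del_edges (theta_class u v)) a b ->
    minn #|comp (theta_class u v) a| #|comp (theta_class u v) b| * f #|T| < #|T|.

Definition in_all_majority (v0 : T) :=
  forall u v : T, e u v ->
  forall a b : T, ~~ connect (del_edges (theta_class u v)) a b ->
    #|comp (theta_class u v) b| < #|comp (theta_class u v) a| ->
    v0 \in comp (theta_class u v) a.

End Graphs.

(* Main.v *)
Require Import Defs.
From mathcomp Require Import all_boot zify.
Set Implicit Arguments. Unset Strict Implicit. Unset Printing Implicit Defensive.

Section Med.
Variables (T : finType) (e : rel T).
Hypothesis esym : symmetric e.
Hypothesis eirr : irreflexive e.
Hypothesis econn : connected_graph e.
Hypothesis emed : median_graph e.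

Local Notation d := (dist e).
Local Notation wl := (walk_len e).

Lemma wl_cat x y z m n : wl x y m -> wl y z n -> wl x z (m + n).
Proof.
elim: m x => [|m IH] x /=; first by move/eqP->.
case/existsP=> w /andP[exw wwy] yz; apply/existsP; exists w; rewrite exw /=.
exact: IH.
Qed.

Lemma wl_edge x y : e x y -> wl x y 1.
Proof. by move=> exy /=; apply/existsP; exists y; rewrite exy eqxx. Qed.

Lemma wl_sym x y n : wl x y n -> wl y x n.
Proof.
elim: n x => [|n IH] x /=; first by move/eqP->.
case/existsP=> w /andP[exw wwy].
have ewx : e w x by rewrite esym.
by have := wl_cat (IH _ wwy) (wl_edge ewx); rewrite addn1.
Qed.

Lemma wl_path x p : path e x p -> wl x (last x p) (size p).
Proof.
elim: p x => [|y p IH] x /=; first by [].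
case/andP=> exy py; apply/existsP; exists y; rewrite exy /=; exact: IH.
Qed.

Lemma wl_short x y : exists2 n, n < #|T| & wl x y n.
Proof.
have /connectP[p px ->] := econn x y.
case: (shortenP px) => p' px' up' _.
exists (size p'); last exact: wl_path.
have := max_card (mem (x :: p')); move/card_uniqP: up' => ->; done.
Qed.

Lemma d_has x y : has (wl x y) (iota 0 #|T|).
Proof.
case: (wl_short x y) => n ltn w; apply/hasP; exists n => //.
by rewrite mem_iota.
Qed.

Lemma d_lt x y : d x y < #|T|.
Proof. by rewrite /dist -[X in _ < X](size_iota 0) -has_find d_has. Qed.

Lemma d_wl x y : wl x y (d x y).
Proof.
have := nth_find 0 (d_has x y); rewrite nth_iota //.
by rewrite -[X in _ < X](size_iota 0) -has_find d_has.
Qed.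

Lemma d_le x y n : wl x y n -> d x y <= n.
Proof.
move=> w; case: (ltnP n #|T|) => hn; last by apply: leq_trans (ltnW (d_lt _ _)) hn.
rewrite leqNgt; apply/negP => h.
have := before_find 0 h; rewrite nth_iota // => hw.
by rewrite /= hw in w.
Qed.

Lemma d_sym x y : d x y = d y x.
Proof. by apply/eqP; rewrite eqn_leq !d_le // wl_sym // d_wl. Qed.

Lemma d_tri x y z : d x z <= d x y + d y z.
Proof. by apply: d_le; apply: wl_cat; apply: d_wl. Qed.

Lemma d0 x y : d x y = 0 -> x = y.
Proof. by move=> h; have := d_wl x y; rewrite h /= => /eqP. Qed.

Lemma dxx x : d x x = 0.
Proof. by apply/eqP; rewrite -leqn0; apply: d_le => /=. Qed.

Lemma d1 x y : d x y = 1 -> e x y.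
Proof.
move=> h; have := d_wl x y; rewrite h /=.
case/existsP=> w /andP[exw]; rewrite /= => /eqP wy; by rewrite -wy.
Qed.

Lemma d_edge x y : e x y -> d x y = 1.
Proof.
move=> exy; apply/eqP; rewrite eqn_leq d_le ?wl_edge //=.
rewrite lt0n; apply/negP => /eqP /d0 exy'.
by rewrite exy' eirr in exy.
Qed.

Lemma d_step x z : x != z -> exists2 y, e x y & d y z + 1 = d x z.
Proof.
move=> nxz; have := d_wl x z.
case hd: (d x z) => [|n] /=; first by move/eqP=> h; rewrite h eqxx in nxz.
case/existsP=> y /andP[exy wy]; exists y => //.
have := d_le wy; have := d_tri x y z; rewrite (d_edge exy) hd; lia.
Qed.


Definition medp x y z m :=
  [/\ d x m + d m y = d x y, d y m + d m z = d y z & d z m + d m x = d z x].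

Lemma med_ex x y z : exists m, medp x y z m.
Proof.
have /eqP/cards1P[m hm] := emed x y z.
have : m \in [set m] by rewrite in_set1.
rewrite -hm !inE => /andP[/andP[/eqP h1 /eqP h2] /eqP h3].
by exists m; split.
Qed.

Lemma med_uniq x y z m1 m2 : medp x y z m1 -> medp x y z m2 -> m1 = m2.
Proof.
have /eqP/cards1P[m hm] := emed x y z.
have H k : medp x y z k -> k = m.
  case=> h1 h2 h3; apply/set1P; rewrite -hm !inE.
  by rewrite h1 h2 h3 !eqxx.
by move=> /H -> /H ->.
Qed.

Lemma edge_le w x y : e x y -> d w x <= d w y + 1.
Proof.
move=> exy; have eyx : e y x by rewrite esym.
by have := d_tri w y x; rewrite (d_edge eyx) addnC.
Qed.

Lemma bip w a b : e a b -> d w a != d w b.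
Proof.
move=> eab; have [m [h1 h2 h3]] := med_ex w a b.
have hab := d_edge eab.
have sa := d_sym w a; have sb := d_sym w b; have sm := d_sym w m.
have sam := d_sym a m; have sbm := d_sym b m.
case ha: (d a m) h2 => [|k] h2.
  move/d0: ha => ham; subst m. rewrite dxx in h3 h1. lia.
have hm : d m b = 0 by lia.
move/d0: hm => hmb; subst m; rewrite dxx in h1 h3; lia.
Qed.

Definition W u v := [set w | d w u < d w v].

Lemma edge_eq w x y : e x y -> (d w x = d w y + 1) \/ (d w y = d w x + 1).
Proof.
move=> exy; have := edge_le w exy; have := edge_le w (y:=x) (x:=y).
rewrite esym => /(_ exy); have := bip w exy; lia.
Qed.

Lemma inW w u v : e u v -> (w \in W u v) = (d w v == d w u + 1).
Proof.
move=> euv; rewrite inE; case: (edge_eq w euv); lia.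
Qed.

Lemma notW w u v : e u v -> (w \in W u v) = (w \notin W v u).
Proof.
move=> euv; rewrite !inE; case: (edge_eq w euv); lia.
Qed.


Lemma noK23 w z o x1 x2 r : z != o -> e z x1 -> e x1 o -> e z x2 -> e x2 o ->
  d w z = r.+1 -> d w o = r.+1 -> d w x1 = r -> d w x2 = r -> x1 = x2.
Proof.
move=> nzo ez1 e1o ez2 e2o hz ho h1 h2.
have dzo : d z o = 2.
  have := d_tri z x1 o; rewrite (d_edge ez1) (d_edge e1o) => le2.
  case hzo: (d z o) le2 => [|[|k]] le2.
  - by move/d0: hzo => hzo; rewrite hzo eqxx in nzo.
  - move/d1: hzo => ezo; have := bip x1 ezo.
    have e1z : e x1 z by rewrite esym.
    by rewrite (d_edge e1z) (d_edge e1o).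
  - lia.
have M k : e z k -> e k o -> d w k = r -> medp z o w k.
  move=> ezk eko hk; have ekz : e k z by rewrite esym.
  have eok : e o k by rewrite esym.
  have := d_sym k w; have := d_sym o w.
  split; rewrite ?(d_edge ezk) ?(d_edge eko) ?(d_edge ekz) ?(d_edge eok) ?dzo //; lia.
exact: med_uniq (M _ ez1 e1o h1) (M _ ez2 e2o h2).
Qed.


Lemma sqW a b c q w : square e a b c q -> w \in W a b -> w \in W q c.
Proof.
rewrite /square => /andP[eab /andP[ebc /andP[ecq /andP[eqa /andP[nac nbq]]]]].
have ecq' : e q c by rewrite esym.
rewrite (notW w ecq') => hw; apply/negP => hw'.
move: hw hw'; rewrite !inW // => /eqP h1 /eqP h2.
have := edge_eq w eqa; have := edge_eq w ebc => h3 h4.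
have [hc hq] : d w c = d w a /\ d w q = d w a + 1 by lia.
have eba : e b a by rewrite esym.
have ecb : e c b by rewrite esym.
have eqa' : e a q by rewrite esym.
have := noK23 (w:=w) (r:=d w a) nbq eba eqa' ebc ecq.
rewrite h1 hq hc addn1 => /(_ erefl erefl erefl erefl) hac.
by rewrite hac eqxx in nac.
Qed.


Lemma Wc u v : e u v -> W v u = ~: W u v.
Proof. by move=> euv; apply/setP => w; rewrite in_setC notW // esym. Qed.

Lemma sq_rev a b c q : square e a b c q -> square e q c b a.
Proof.
rewrite /square => /andP[eab /andP[ebc /andP[ecq /andP[eqa /andP[nac nbq]]]]].
by rewrite esym ecq esym ebc esym eab esym eqa eq_sym nbq eq_sym nac.
Qed.

Lemma sqWeq a b c q : square e a b c q -> W a b = W q c.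
Proof.
move=> hs; apply/setP => w; apply/idP/idP; first exact: sqW.
exact: sqW (sq_rev hs).
Qed.

Definition Inv u v (p : T * T) := (W p.1 p.2 == W u v) || (W p.1 p.2 == W v u).

Lemma sq_e1 a b c q : square e a b c q -> e a b.
Proof. by case/andP. Qed.
Lemma sq_e3 a b c q : square e a b c q -> e c q.
Proof. by rewrite /square => /and4P[]. Qed.

Lemma Inv_step u v p q : e u v -> theta0 e p q -> Inv u v p -> Inv u v q.
Proof.
move=> euv; rewrite /theta0 /Inv; case/orP => hs.
  by rewrite (sqWeq hs).
rewrite (sqWeq hs) => h.
have eq21 : e q.2 q.1 by rewrite esym; exact: sq_e3 hs.
rewrite (Wc eq21) (Wc euv); move: h; rewrite (Wc euv).
by case/orP => /eqP ->; rewrite ?setCK eqxx ?orbT.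
Qed.

Lemma Inv_connect u v s p : e u v -> connect (theta0 e) s p -> Inv u v s -> Inv u v p.
Proof.
move=> euv /connectP[pth hp ->]; elim: pth s hp => [|q pth IH] s //= /andP[hsq hp] hs.
exact: IH hp (Inv_step euv hsq hs).
Qed.

Lemma Ecross u v p : e u v -> p \in theta_class e u v -> (p.1 \in W u v) != (p.2 \in W u v).
Proof.
move=> euv; rewrite inE => /andP[ep /orP hc].
have Ip : Inv u v p.
  case: hc => hc; apply: Inv_connect euv hc _; rewrite /Inv /= eqxx ?orbT //.
have h1 : p.1 \in W p.1 p.2 by rewrite inE dxx d_edge.
have h2 : p.2 \notin W p.1 p.2 by rewrite inE dxx.
case/orP: Ip => /eqP hW; rewrite hW in h1 h2.
  by rewrite h1 (negbTE h2).
by rewrite (Wc euv) !in_setC negbK in h1 h2; rewrite (negbTE h1) h2.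
Qed.

Lemma cross_d u v x y : e u v -> e x y -> x \in W u v -> y \notin W u v ->
  [/\ d y v = d x u, d y u = (d x u).+1 & d x v = (d x u).+1].
Proof.
move=> euv exy hx hy; have eyx : e y x by rewrite esym.
move: hx; rewrite inW // => /eqP hx.
have evu : e v u by rewrite esym.
move: hy; rewrite -(notW _ evu) (inW _ evu) => /eqP hy.
have := edge_le u exy; have := edge_le u eyx; have := edge_le v exy; have := edge_le v eyx.
have := d_sym u x; have := d_sym u y; have := d_sym v x; have := d_sym v y.
move=> *; split; lia.
Qed.

Lemma K2 u v k x y : e u v -> d x u = k -> e x y -> x \in W u v -> y \notin W u v ->
  connect (theta0 e) (u, v) (x, y).
Proof.
move=> euv; elim: k x y => [|k IH] x y hk exy hx hy.
  have [h1 h2 h3] := cross_d euv exy hx hy.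
  rewrite hk in h1; have hxu : x = u := d0 hk; have hyv : y = v := d0 h1.
  by rewrite hxu hyv; exact: connect0.
have [h1 h2 h3] := cross_d euv exy hx hy.
have nxu : x != u by apply/negP => /eqP hxu; rewrite hxu dxx in hk.
have [x' exx' hx'] := d_step nxu.
have ex'x : e x' x by rewrite esym.
have hx'W : x' \in W u v.
  rewrite inE; have := edge_le v exx'; have := d_sym v x; have := d_sym v x'; lia.
have dx'v : d x' v = k.+1.
  move: hx'W; rewrite inW // => /eqP; lia.
have dx'y : d x' y = 2.
  have := d_tri x' x y; rewrite (d_edge ex'x) (d_edge exy) => le2.
  case hxy: (d x' y) le2 => [|[|j]] le2.
  - by move/d0: hxy => hxy; rewrite -hxy hx'W in hy.
  - move/d1: hxy => exy'; have := bip x exy'.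
    have eyx : e y x by rewrite esym.
    by rewrite (d_edge exx') d_sym (d_edge eyx).
  - lia.
have [m [m1 m2 m3]] := med_ex x' y v.
have := d_sym y m; have := d_sym v m; have := d_sym m x'; have := d_sym v x'.
move=> s1 s2 s3 s4.
have dx'm : d x' m = 1 by lia.
have dym : d y m = 1 by lia.
have dmv : d m v = k by lia.
have hmW : m \notin W u v.
  apply/negP; rewrite inW // => /eqP hm.
  have := d_tri y m u; lia.
have ex'm : e x' m by apply: d1.
have emy : e m y by apply: d1; rewrite -s4.
apply: connect_trans (IH x' m _ ex'm hx'W hmW) _; first by move: hx' hk; clear; lia.
apply: connect1; rewrite /theta0 /= /square ex'm emy esym exy exx' /=.
apply/orP; left; apply/andP; split.
  by apply/negP => /eqP hxy'; rewrite -hxy' hx'W in hy.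
apply/negP => /eqP hmx; rewrite hmx in dmv; move: dmv h3 hk; clear; lia.
Qed.


Lemma Ein u v x y : e u v -> e x y -> (x \in W u v) != (y \in W u v) ->
  (x, y) \in theta_class e u v.
Proof.
move=> euv exy hd; have evu : e v u by rewrite esym.
rewrite inE /= exy /=; case hx: (x \in W u v) hd => /= hy.
  have hy' : y \notin W u v by move: hy; case: (y \in W u v).
  by rewrite (K2 euv erefl exy hx hy').
have hy' : y \in W u v by move: hy; case: (y \in W u v).
have hx' : x \in W v u by rewrite (notW _ evu) hx.
have hy'' : y \notin W v u by rewrite (notW _ evu) negbK.
by rewrite (K2 evu erefl exy hx' hy'') orbT.
Qed.

Lemma del_iff u v x y : e u v ->
  del_edges e (theta_class e u v) x y = e x y && ((x \in W u v) == (y \in W u v)).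
Proof.
move=> euv; rewrite /del_edges; case exy: (e x y) => //=.
case: eqP => hxy.
  apply/negP => hE; have := Ecross euv hE; by rewrite /= hxy eqxx.
by rewrite Ein //; apply/eqP.
Qed.

Lemma K3 u v (r : rel T) : e u v ->
  (forall x y, e x y -> x \in W u v -> y \in W u v -> r x y) ->
  forall z, z \in W u v -> connect r z u /\ connect r u z.
Proof.
move=> euv hr z; move hk: (d z u) => k; elim: k z hk => [|k IH] z hk hz.
  by rewrite (d0 hk); split; apply: connect0.
have nzu : z != u by apply/negP => /eqP hzu; rewrite hzu dxx in hk.
have [z' ezz' hz'] := d_step nzu.
have ez'z : e z' z by rewrite esym.
have hz'W : z' \in W u v.
  have := hz; rewrite (inW _ euv) => /eqP hzd.
  rewrite inE; have := edge_le v ezz'; have := d_sym v z; have := d_sym v z'.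
  move: hz' hk hzd; clear; lia.
have [c1 c2] := IH z' (ltac:(move: hz' hk; clear; lia)) hz'W.
split.
  exact: connect_trans (connect1 (hr _ _ ezz' hz hz'W)) c1.
exact: connect_trans c2 (connect1 (hr _ _ ez'z hz'W hz)).
Qed.

Lemma conn_char u v a b : e u v ->
  connect (del_edges e (theta_class e u v)) a b = ((b \in W u v) == (a \in W u v)).
Proof.
move=> euv; have evu : e v u by rewrite esym.
set r := del_edges e _.
apply/idP/idP.
  move=> hc; have hcl : closed r (W u v).
    by move=> x y; rewrite /r del_iff // => /andP[_ /eqP].
  by rewrite (closed_connect hcl hc) eqxx.
have h1 : forall x y, e x y -> x \in W u v -> y \in W u v -> r x y.
  by move=> x y exy hx hy; rewrite /r del_iff // exy hx hy.
have h2 : forall x y, e x y -> x \in W v u -> y \in W v u -> r x y.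
  move=> x y exy; rewrite !(notW _ evu) => hx hy.
  by rewrite /r del_iff // exy (negbTE hx) (negbTE hy).
case ha: (a \in W u v) => /eqP hb.
  have [c1 _] := K3 euv h1 ha; have [_ c2] := K3 euv h1 hb.
  exact: connect_trans c1 c2.
have ha' : a \in W v u by rewrite (notW _ evu) ha.
have hb' : b \in W v u by rewrite (notW _ evu) hb.
have [c1 _] := K3 evu h2 ha'; have [_ c2] := K3 evu h2 hb'.
exact: connect_trans c1 c2.
Qed.

Lemma lemC u v x x1 y : e u v -> e x x1 -> x \in W u v -> x1 \notin W u v ->
  y \in W u v -> d y x < d y x1.
Proof.
move=> euv exx1 hx hx1 hy.
have hc := K2 euv erefl exx1 hx hx1.
have := Inv_connect euv hc; rewrite /Inv /= !eqxx => /(_ isT) /orP [] /eqP hW.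
  by move: hy; rewrite -hW inE.
have : x \in W x x1 by rewrite inE dxx d_edge.
by rewrite hW (Wc euv) in_setC hx.
Qed.

Lemma conv u v n : e u v -> forall x y, d x y = n -> x \in W u v -> y \in W u v ->
  forall z, d x z + d z y = d x y -> z \in W u v.
Proof.
move=> euv; elim: n => [|n IH] x y hn hx hy z hz.
  have hxy := d0 hn; subst y.
  have : d x z = 0 by move: hz hn; clear; lia.
  by move/d0 => <-.
case: (eqVneq z x) => [-> //|nzx].
have nxz : x != z by rewrite eq_sym.
have [x1 exx1 h1] := d_step nxz.
have t1 := d_tri x1 z y; have t2 := d_tri x x1 y.
rewrite (d_edge exx1) in t2.
have dx1y : d x1 y = n by move: t1 t2 h1 hz hn; clear; lia.
case hx1: (x1 \in W u v).
  apply: (IH x1 y dx1y hx1 hy z); move: h1 hz hn dx1y; clear; lia.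
have := lemC euv exx1 hx (negbT hx1) hy.
have := d_sym y x; have := d_sym y x1; move: hn dx1y; clear; lia.
Qed.


Definition Dsum x := \sum_(w : T) d x w.

Lemma card_sum (A : {set T}) : #|A| = \sum_(w : T) ((w \in A) : nat).
Proof. by rewrite -sum1_card big_mkcond; apply: eq_bigr => w _; case: (w \in A). Qed.

Lemma D_edge a b : e a b -> Dsum b + #|W b a| = Dsum a + #|W a b|.
Proof.
move=> eab; have eba : e b a by rewrite esym.
rewrite /Dsum !card_sum -!big_split /=; apply: eq_bigr => w _.
have s1 := d_sym a w; have s2 := d_sym b w; have := edge_eq w eab.
rewrite !inE; case: (ltngtP (d w a) (d w b)) => /= h; move: h s1 s2; clear; lia.
Qed.

Lemma Maj u v v0 : e u v -> (forall y, Dsum v0 <= Dsum y) -> #|T| < 2 * #|W u v| ->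
  v0 \in W u v.
Proof.
move=> euv hmin hbig; apply/negP => hv0.
have uW : u \in W u v by rewrite inE dxx d_edge.
case: (@arg_minnP T u (fun g => g \in W u v) (d v0) uW) => g gW gmin.
have nvg : v0 != g by apply/negP => /eqP h; rewrite h gW in hv0.
have [x' ex' hx'] := d_step nvg.
have sub : W u v \subset W x' v0.
  apply/subsetP => w hw; rewrite inE.
  have [m [m1 m2 m3]] := med_ex v0 g w.
  have mW : m \in W u v := conv euv erefl gW hw m2.
  have := gmin m mW => hle.
  have hmg : m = g by apply: d0; move: m1 hle; clear; lia.
  subst m.
  have := d_tri w g x'; have := d_sym g x'; have := d_sym g v0.
  move: m3 hx'; clear; lia.
have c1 := subset_leq_card sub.
have ex'v : e x' v0 by rewrite esym.
have c2 : #|W v0 x'| + #|W x' v0| = #|T|.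
  by rewrite (Wc ex') cardsC.
have := D_edge ex'; have := hmin x'.
move: c1 c2 hbig; clear; lia.
Qed.

Lemma comp_eq u v a : e u v ->
  Defs.comp e (theta_class e u v) a = if a \in W u v then W u v else W v u.
Proof.
move=> euv; apply/setP => z; rewrite /Defs.comp inE conn_char //.
case: (a \in W u v); first by case: (z \in W u v).
by rewrite (Wc euv) in_setC; case: (z \in W u v).
Qed.

Lemma cardW u v : e u v -> #|W u v| + #|W v u| = #|T|.
Proof. by move=> euv; rewrite (Wc euv) cardsC. Qed.

Lemma main_sec f : all_unbalanced e f -> 2 <= f #|T| -> 0 < #|T| ->
  exists! v0, in_all_majority e v0.
Proof.
move=> hU hf /card_gt0P [x0 _].
case: (@arg_minnP T x0 xpredT Dsum isT) => v0 _ hmin0.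
have hmin : forall y, Dsum v0 <= Dsum y by move=> y; exact: hmin0.
have evP : in_all_majority e v0.
  move=> u v euv a b hab hlt; have evu : e v u by rewrite esym.
  rewrite conn_char // in hab.
  rewrite !comp_eq // in hlt *.
  have cW := cardW euv.
  case ha: (a \in W u v) hab hlt; case hb: (b \in W u v) => // _ hlt.
    by apply: Maj euv hmin _; move: cW hlt; clear; lia.
  by apply: Maj evu hmin _; move: cW hlt; clear; lia.
exists v0; split => // v1 h1.
case: (eqVneq v0 v1) => // hne.
have [x' ex' hx'] := d_step hne.
have ex'v : e x' v0 by rewrite esym.
have v0W : v0 \in W v0 x' by rewrite inE dxx d_edge.
have x'W : x' \notin W v0 x' by rewrite inE dxx.
have nc1 : ~~ connect (del_edges e (theta_class e v0 x')) v0 x'.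
  by rewrite conn_char // v0W (negbTE x'W).
have nc2 : ~~ connect (del_edges e (theta_class e v0 x')) x' v0.
  by rewrite conn_char // v0W (negbTE x'W).
have hc0 := comp_eq v0 ex'; rewrite v0W in hc0.
have hc1 := comp_eq x' ex'; rewrite (negbTE x'W) in hc1.
have cW := cardW ex'.
have hu := hU v0 x' ex' v0 x' nc1; rewrite hc0 hc1 in hu.
case: (ltngtP #|W x' v0| #|W v0 x'|) => hlt.
- have := h1 v0 x' ex' v0 x' nc1; rewrite hc0 hc1 => /(_ hlt).
  rewrite inE; have := d_sym v1 v0; have := d_sym v1 x'.
  move: hx'; clear; lia.
- have := evP v0 x' ex' x' v0 nc2; rewrite hc0 hc1 => /(_ hlt).
  by rewrite (Wc ex') in_setC v0W.
- rewrite hlt minnn in hu; move: hu cW hlt hf; clear; nia.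
Qed.

End Med.

Theorem mainTheorem5 (f : nat -> nat) (T : finType) (e : rel T) :
  (forall n, 0 < n -> 0 < f n) ->
  simple_graph e -> connected_graph e -> 0 < #|T| ->
  median_graph e -> all_unbalanced e f ->
  2 <= f #|T| ->
  exists! v0 : T, in_all_majority e v0.
Proof.
move=> _ [esym eirr] econn hT emed hU hf.
exact: (main_sec esym eirr econn emed hU hf hT).
Qed.
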